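(* Fix $k\ge1$, times $0=t_0<t_1<\cdots<t_k$, withdrawal amounts $w_1,\dots,w_k>0$, constants $a_1,\dots,a_{k-1}>0$, and an initial investment $P>0$. Let $W_k$ be the amount remaining after the $k$-th withdrawal and $Z_0^*$ the lower bound variable, both as defined in the context. Then $$\mathbb P(W_k\ge0)\le\mathbb P(Z_0^*\le P).$$ (Here $W_k\ge0$ is exactly the event that the withdrawals $w_1,\dots,w_k$ at times $t_1,\dots,t_k$ can all be made.)
   Context: Wealth process: on a probability space $(\Omega,\mathcal F,\mathbb P)$, $X:[0,\infty)\times\Omega\to(0,\infty)$ is a process such that $\log X$ is a Lévy process (càdlàg paths, independent increments) with, for all $0\le s<t$, $\log\frac{X(t)}{X(s)}$ a Lévy alpha-stable random variable with shape $\alpha\in(0,2]$, skewness $\beta\in[-1,1]$, scale $\sigma(t-s)^{1/\alpha}$ ($\sigma>0$) and location $\mu(t-s)$ ($\mu\in\mathbb R$). Set $X_j=X(t_j)/X(t_{j-1})$ for $j\ge1$. Withdrawals: $W_1=PX_1-w_1$ and $W_j=W_{j-1}X_j-w_j$ for $j=2,\dots,k$. Required initial investment: $W_{k-1}^*=w_kX_k^{-1}$ and $W_{j-1}^*=X_j^{-1}(W_j^*+w_j)$ for $j=k-1,\dots,1$. Lower bound: with $b_j=\frac{a_j}{a_j+w_j}$, set $Z_{k-1}^*=W_{k-1}^*$ and $Z_{j-1}^*=X_j^{-1}(a_j+w_j)\left(\frac{Z_j^*}{a_j}\right)^{b_j}$ for $j=k-1,\dots,1$. *)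

(* Defs.v *)
From HB Require Import structures.
From mathcomp Require Import all_boot all_order all_algebra.
From mathcomp Require Import all_classical all_reals all_analysis.
Set Implicit Arguments. Unset Strict Implicit. Unset Printing Implicit Defensive.
Import Order.TTheory GRing.Theory Num.Theory.
Import numFieldNormedType.Exports.
Local Open Scope classical_set_scope.
Local Open Scope ring_scope.

Section Defs.
Context {R : realType} {d : measure_display} {T : measurableType d}.

(* Mutual independence of the real random variables Y 0, ..., Y (n-1):
   product rule for all Borel sets (taking B i = setT gives subfamilies). *)
Definition mutually_independent (P : probability T R) (n : nat)
  (Y : nat -> T -> R) : Prop :=
  forall B : nat -> set R, (forall i, measurable (B i)) ->
    P [set w | forall i, (i < n)%N -> B i (Y i w)] =
    (\prod_(i < n) P (Y i @^-1` B i))%E.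

(* Characteristic function of the alpha-stable law S_alpha(c, beta, delta)
   (scale c, skewness beta, location delta), standard (Samorodnitsky-Taqqu)
   parametrization:
   phi(u) = exp(i u delta - |c u|^alpha (1 - i beta sgn(u) Phi(u))),
   Phi(u) = tan(pi alpha / 2) if alpha <> 1, -(2/pi) ln|u| if alpha = 1.
   We give its real and imaginary parts. *)
Definition stable_Phi (alpha u : R) : R :=
  if alpha == 1 then - (2 / pi) * ln `|u| else tan (pi * alpha / 2).

Definition stable_cf_arg (alpha beta c delta u : R) : R :=
  u * delta + `|c * u| `^ alpha * beta * Num.sg u * stable_Phi alpha u.

Definition stable_cf_re (alpha beta c delta u : R) : R :=
  expR (- `|c * u| `^ alpha) * cos (stable_cf_arg alpha beta c delta u).

Definition stable_cf_im (alpha beta c delta u : R) : R :=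
  expR (- `|c * u| `^ alpha) * sin (stable_cf_arg alpha beta c delta u).

Definition stable_law (P : probability T R) (Y : T -> R)
  (alpha beta c delta : R) : Prop :=
  forall u : R,
    (\int[P]_w (cos (u * Y w))%:E = (stable_cf_re alpha beta c delta u)%:E)%E /\
    (\int[P]_w (sin (u * Y w))%:E = (stable_cf_im alpha beta c delta u)%:E)%E.

(* The wealth process X : [0,oo) x Omega -> (0,oo) such that log X is a Levy
   process with alpha-stable increments as in the context. *)
Definition stable_wealth_process (P : probability T R) (X : R -> T -> R)
  (alpha beta sigma mu : R) : Prop :=
  [/\ (forall t, 0 <= t -> measurable_fun setT (X t)) /\
      (forall t w, 0 <= t -> 0 < X t w),
      P [set w | ln (X 0 w) = 0] = 1%E,
      ((forall w t, 0 <= t ->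
         (fun r => ln (X r w)) @ t^'+ --> ln (X t w)) /\
       (forall w t, 0 < t -> exists l : R,
          (fun r => ln (X r w)) @ t^'- --> l)),
      (forall (n : nat) (s : nat -> R), 0 <= s 0%N ->
         (forall i, (i < n)%N -> s i < s i.+1) ->
         mutually_independent P n
           (fun i w => ln (X (s i.+1) w / X (s i) w))) &
      (forall s t, 0 <= s -> s < t ->
         stable_law P (fun w => ln (X t w / X s w))
           alpha beta (sigma * (t - s) `^ alpha^-1) (mu * (t - s)))].

End Defs.

Definition ret {R : realType} {T : Type} (X : R -> T -> R) (t : nat -> R)
  (j : nat) (w : T) : R := X (t j) w / X (t j.-1) w.

Fixpoint Wamt {R : realType} {T : Type} (X : R -> T -> R) (t : nat -> R)
  (wd : nat -> R) (P0 : R) (j : nat) (w : T) : R :=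
  match j with
  | 0 => P0
  | j'.+1 => Wamt X t wd P0 j' w * ret X t j w - wd j
  end.

(* Lower bound variable, computed backwards:
   Zaux k 0 = Z*_{k-1} = W*_{k-1} = w_k X_k^{-1},
   Zaux k (n+1) = Z*_{j-1} with j = k-1-n,
     Z*_{j-1} = X_j^{-1} (a_j + w_j) (Z*_j / a_j)^{b_j}, b_j = a_j/(a_j+w_j). *)
Fixpoint Zaux {R : realType} {T : Type} (X : R -> T -> R) (t : nat -> R)
  (wd a : nat -> R) (k n : nat) (w : T) : R :=
  match n with
  | 0 => wd k / ret X t k w
  | n'.+1 =>
      let j := (k - n)%N in
      (ret X t j w)^-1 * (a j + wd j) *
        powR (Zaux X t wd a k n' w / a j) (a j / (a j + wd j))
  end.

Definition Zstar0 {R : realType} {T : Type} (X : R -> T -> R) (t : nat -> R)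
  (wd a : nat -> R) (k : nat) (w : T) : R := Zaux X t wd a k k.-1 w.

(* Main.v *)
Require Import Defs.
From HB Require Import structures.
From mathcomp Require Import all_boot all_order all_algebra.
From mathcomp Require Import all_classical all_reals all_analysis.
From mathcomp Require Import zify ring lra measurable_realfun measurable_fun_approximation.
Import Order.TTheory GRing.Theory Num.Theory.
Import numFieldNormedType.Exports.
Local Open Scope classical_set_scope.
Local Open Scope ring_scope.

Lemma amgm (R : realType) (Z a w : R) : 0 < Z -> 0 < a -> 0 < w ->
  (a + w) * powR (Z / a) (a / (a + w)) <= Z + w.
Proof.
move=> Z0 a0 w0.
set b := a / (a + w).
have aw0 : 0 < a + w by rewrite addr_gt0.
have b0 : 0 < b by rewrite divr_gt0.
have b1 : 0 < 1 - b by rewrite /b subr_gt0 ltr_pdivrMr // mul1r ltrDl.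
have Za0 : 0 <= Z / a by rewrite divr_ge0 // ltW.
have := (conjugate_powR (a:=powR (Z / a) b) (b:=1) (p:=b^-1) (q:=(1 - b)^-1) (powR_ge0 _ _) ler01
  (_ : 0 < b^-1) (_ : 0 < (1 - b)^-1)).
move=> /(_ ltac:(by rewrite invr_gt0) ltac:(by rewrite invr_gt0)).
move=> /(_ ltac:(by rewrite !invrK addrCA subrr addr0)).

rewrite -powRrM mulfV ?gt_eqF // powRr1 // powR1 !invrK mulr1 => H.
apply: le_trans (ler_wpM2l (ltW aw0) H) _.
rewrite /b le_eqVlt; apply/orP; left; apply/eqP; field.
by rewrite gt_eqF // lt0r_neq0.
Qed.

Lemma meas_inv (R : realType) (d : measure_display) (T : measurableType d)
  (f : T -> R) : measurable_fun setT f -> (forall w, 0 < f w) ->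
  measurable_fun setT (fun w => (f w)^-1).
Proof.
move=> mf fp.
have -> : (fun w => (f w)^-1) = (fun w => powR (f w) (-1)).
  by apply: funext => w; rewrite powR_inv1 // ltW.
exact: (measurableT_comp (measurable_powR (-1)) mf).
Qed.

Lemma t_ge0 (R : realType) (k : nat) (t : nat -> R) :
  t 0%N = 0 -> (forall j, (j < k)%N -> t j < t j.+1) ->
  forall j, (j <= k)%N -> 0 <= t j.
Proof.
move=> t0 tinc; elim=> [|j IH] jk; first by rewrite t0.
apply: le_trans (IH (ltnW jk)) (ltW (tinc _ jk)).
Qed.

Theorem theorem6 (R : realType) (d : measure_display) (T : measurableType d)
  (P : probability T R) (X : R -> T -> R)
  (alpha beta sigma mu : R)
  (k : nat) (t : nat -> R) (wd a : nat -> R) (P0 : R) :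
  0 < alpha <= 2 -> -1 <= beta <= 1 -> 0 < sigma ->
  stable_wealth_process P X alpha beta sigma mu ->
  (1 <= k)%N ->
  t 0%N = 0 -> (forall j, (j < k)%N -> t j < t j.+1) ->
  (forall j, (1 <= j <= k)%N -> 0 < wd j) ->
  (forall j, (1 <= j <= k.-1)%N -> 0 < a j) ->
  0 < P0 ->
  (P [set w | (0 <= Wamt X t wd P0 k w)%R] <=
   P [set w | (Zstar0 X t wd a k w <= P0)%R])%E.
Proof.
move=> _ _ _ [[Xm Xp] _ _ _ _] k1 t0 tinc wdp ap P0p.
have tge := @t_ge0 R k t t0 tinc.
have retp : forall j w, (j <= k)%N -> 0 < ret X t j w.
  move=> j w jk; rewrite /ret divr_gt0 // Xp // tge //.
  by apply: leq_trans jk; exact: leq_pred.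
have retm : forall j, (j <= k)%N -> measurable_fun setT (ret X t j).
  move=> j jk; apply: measurable_funM; first exact/Xm/tge.
  apply: meas_inv; first by apply/Xm/tge; apply: leq_trans jk; exact: leq_pred.
  by move=> w; apply/Xp/tge; apply: leq_trans jk; exact: leq_pred.
have Wm : forall j, (j <= k)%N -> measurable_fun setT (Wamt X t wd P0 j).
  elim=> [|j IH] jk /=; first exact: measurable_cst.
  apply: measurable_funB; last exact: measurable_cst.
  by apply: measurable_funM; [exact/IH/ltnW | exact: retm].
have Zm : forall n, (n <= k.-1)%N -> measurable_fun setT (Zaux X t wd a k n).
  elim=> [|n IH] nk /=.
    apply: measurable_funM; first exact: measurable_cst.
    by apply: meas_inv; [exact: retm | move=> w; exact: retp].
  apply: measurable_funM.
    apply: measurable_funM; last exact: measurable_cst.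
    apply: meas_inv; [apply: retm; exact: leq_subr | move=> w; apply: retp; exact: leq_subr].
  apply: (measurableT_comp (measurable_powR _)).
  apply: measurable_funM; [exact/IH/ltnW | exact: measurable_cst].
have path : forall w, 0 <= Wamt X t wd P0 k w ->
  forall n, (n <= k.-1)%N ->
    0 < Zaux X t wd a k n w /\ Zaux X t wd a k n w <= Wamt X t wd P0 (k.-1 - n) w.
  move=> w Wk; elim=> [|n IH] nk /=.
    have kk : k = (k.-1).+1 by rewrite prednK.
    have rp := retp k w (leqnn k).
    have wk := wdp k ltac:(by rewrite k1 leqnn).
    rewrite subn0; split; first by rewrite divr_gt0.
    rewrite ler_pdivrMr //.
    move: Wk; rewrite {1}kk /= -kk subr_ge0.
    done.
  have [Zp ZW] := IH (ltnW nk).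
  set j := (k - n.+1)%N.
  have jE : (k.-1 - n = j)%N by rewrite /j subnS; lia.
  have j1 : (1 <= j)%N by rewrite /j; lia.
  have jk : (j <= k)%N by exact: leq_subr.
  have rp := retp j w jk.
  have wj := wdp j ltac:(by rewrite j1 jk).
  have aj := ap j ltac:(by rewrite j1 /j; lia).
  have jm : (k.-1 - n.+1 = j.-1)%N by rewrite /j; lia.
  rewrite jm; rewrite jE in ZW.
  have pwp : 0 < powR (Zaux X t wd a k n w / a j) (a j / (a j + wd j)).
    by rewrite powR_gt0 // divr_gt0.
  split; first by rewrite !mulr_gt0 ?invr_gt0 ?addr_gt0.
  have Wj : Wamt X t wd P0 j w = Wamt X t wd P0 j.-1 w * ret X t j w - wd j.
    by rewrite -{1}(prednK j1) /= (prednK j1).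
  rewrite -mulrA mulrC ler_pdivrMr // mulrC.
  rewrite [X in X <= _]mulrC. apply: le_trans (@amgm R _ _ _ Zp aj wj) _.
  have -> : Wamt X t wd P0 j.-1 w * ret X t j w = Wamt X t wd P0 j w + wd j by rewrite Wj subrK.
  by rewrite lerD2r.
apply: le_measure; rewrite ?inE.
- rewrite -[X in measurable X]setTI; apply: measurable_fun_le => //.
  exact: Wm.
- rewrite -[X in measurable X]setTI; apply: measurable_fun_le => //.
  exact: (Zm k.-1 (leqnn _)).
move=> w /= Wk; have [_ H] := path w Wk k.-1 (leqnn _).
by rewrite subnn /= in H.
Qed.
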